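(* For all integers $0<k < n$, the polynomial \[ \overline{ { n \brack k}}_{q,t}^2- \overline{ { n \brack k-1}}_{q,t} \overline{ { n \brack k+1}}_{q,t} \] has non-negative coefficients as a polynomial in $q$ and $t$.
   Context: An overpartition is a partition in which the last occurrence of each distinct part size may be overlined; its weight $|\lambda|$ is the sum of its parts. For integers $0\le b\le a$, $\overline{{a \brack b}}_{q,t}=\sum_{\lambda} t^{\#_o(\lambda)} q^{|\lambda|}$, the sum over all overpartitions $\lambda$ with largest part at most $a-b$ and at most $b$ parts, $\#_o(\lambda)$ being the number of overlined parts. *)

(* Defs.v *)
From HB Require Import structures.
From mathcomp Require Import all_boot all_order all_algebra.
Set Implicit Arguments. Unset Strict Implicit. Unset Printing Implicit Defensive.
Import Order.TTheory GRing.Theory Num.Theory.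
Local Open Scope ring_scope.

(* An overpartition with largest part <= m and at most b parts is encoded as
   - p : {ffun 'I_b -> 'I_m.+1}, a nonincreasing b-tuple of parts in [0,m]
     (zero entries are padding, i.e. absent parts), and
   - o : {ffun 'I_b -> bool}, overline flags, allowed only on a positive entry
     that is the last occurrence of its value (all later entries are strictly
     smaller).
   This is a bijection with overpartitions in the b x m box. *)
Definition is_overpart (m b : nat) (p : {ffun 'I_b -> 'I_m.+1})
    (o : {ffun 'I_b -> bool}) : bool :=
  [forall i : 'I_b, forall j : 'I_b, (i <= j)%N ==> (p j <= p i)%N] &&
  [forall i : 'I_b, o i ==>
     ((0 < p i)%N && [forall j : 'I_b, (i < j)%N ==> (p j < p i)%N])].

Definition op_weight (b m : nat) (p : {ffun 'I_b -> 'I_m.+1}) : nat :=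
  (\sum_(i : 'I_b) nat_of_ord (p i))%N.

Definition op_novl (b : nat) (o : {ffun 'I_b -> bool}) : nat :=
  (\sum_(i : 'I_b) nat_of_bool (o i))%N.

(* Overpartition analogue of the Gaussian polynomial, for 0 <= b <= a,
   as a bivariate integer polynomial: an element of {poly {poly int}} whose
   outer variable is t and whose inner variable (coefficients) is q. *)
Definition ovgauss (a b : nat) : {poly {poly int}} :=
  \sum_(po : {ffun 'I_b -> 'I_(a - b).+1} * {ffun 'I_b -> bool}
        | is_overpart po.1 po.2)
     ('X^(op_novl po.2) * ('X^(op_weight po.1))%:P).

(* Main.v *)
Require Import Defs.
From HB Require Import structures.
From mathcomp Require Import all_boot all_order all_algebra.
From mathcomp Require Import ring zify.
Import GRing.Theory Num.Theory.
Local Open Scope ring_scope.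

Notation P := {poly {poly int}}.
Definition qq : P := ('X)%:P.
Definition tt : P := 'X.

Definition posi (p : {poly int}) := forall j, 0 <= p`_j.
Definition pos (p : P) := forall i, posi p`_i.

Lemma posi0 : posi 0. Proof. by move=> j; rewrite coef0. Qed.
Lemma posiD p r : posi p -> posi r -> posi (p + r).
Proof. by move=> hp hr j; rewrite coefD addr_ge0. Qed.
Lemma posi_sum (I : finType) (F : I -> {poly int}) :
  (forall i, posi (F i)) -> posi (\sum_i F i).
Proof.
move=> h j; rewrite coef_sum; apply: sumr_ge0 => i _; exact: h.
Qed.
Lemma posiM p r : posi p -> posi r -> posi (p * r).
Proof.
move=> hp hr j; rewrite coefM; apply: sumr_ge0 => i _; exact: mulr_ge0.
Qed.
Lemma pos0 : pos 0. Proof. by move=> i j; rewrite !coef0. Qed.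
Lemma posD p r : pos p -> pos r -> pos (p + r).
Proof. by move=> hp hr i; rewrite coefD; apply: posiD. Qed.
Lemma posM p r : pos p -> pos r -> pos (p * r).
Proof.
move=> hp hr i; rewrite coefM.
by apply: posi_sum => j; apply: posiM.
Qed.
Lemma pos1 : pos 1.
Proof. by move=> i j; rewrite coefC; case: (i == 0)%N; rewrite ?coef0 // coefC; case: (j == 0)%N. Qed.
Lemma posq : pos qq.
Proof. move=> i j; rewrite coefC; case: (i == 0)%N; rewrite ?coef0 // coefX; by case: (j == 1)%N. Qed.
Lemma post : pos tt.
Proof. move=> i j; rewrite coefX; case: (i == 1)%N; rewrite ?coef0 // coefC; by case: (j == 0)%N. Qed.
Lemma posX p n : pos p -> pos (p ^+ n).
Proof. move=> hp; elim: n => [|n ih]; first exact: pos1. by rewrite exprS; apply: posM. Qed.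

Fixpoint G (m : nat) : nat -> P :=
  match m with
  | 0 => fun _ => 1
  | m'.+1 => fix Gb (b : nat) : P :=
      match b with
      | 0 => 1
      | b'.+1 => G m' b'.+1 + qq ^+ m'.+1 * Gb b' + tt * qq ^+ m'.+1 * G m' b'
      end
  end.

Lemma G0b b : G 0 b = 1. Proof. by []. Qed.
Lemma Gm0 m : G m 0 = 1. Proof. by case: m. Qed.
Lemma GSS m b : G m.+1 b.+1 = G m b.+1 + qq ^+ m.+1 * G m.+1 b + tt * qq ^+ m.+1 * G m b.
Proof. by []. Qed.

Lemma posG m b : pos (G m b).
Proof.
elim: m b => [|m ih] b; first exact: pos1.
elim: b => [|b ihb]; first exact: pos1.
rewrite GSS; apply: posD; [apply: posD|]; try apply: posM; try apply: posM;
  rewrite ?ih ?ihb //; try apply: posX; try apply: posq; try apply post; by [].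
Qed.

Lemma lincomb (x y : P) : x - y = 0 -> x = y.
Proof. by move/eqP; rewrite subr_eq0 => /eqP. Qed.

Lemma GSS2 m n : G m.+1 n.+1 = G m.+1 n + qq ^+ n.+1 * G m n.+1 + tt * qq ^+ n.+1 * G m n.
Proof.
move: {2}(m + n)%N (leqnn (m + n)) => k; elim: k m n => [|k ih] m n hk.
  have [-> ->] : m = 0%N /\ n = 0%N by lia.
  by rewrite GSS !Gm0 !G0b; ring.
case: m hk => [|m'] hk; case: n hk => [|n'] hk.
- by rewrite GSS !Gm0 !G0b; ring.
-
  have E1 := ih 0%N n' ltac:(lia).
  have E2 := GSS 0 n'.
  have F1 : G 1 n'.+1 - (G 1 n' + qq ^+ n'.+1 * G 0 n'.+1 + tt * qq ^+ n'.+1 * G 0 n') = 0.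
    by rewrite E1 subrr.
  have F2 : G 1 n'.+1 - (G 0 n'.+1 + qq ^+ 1 * G 1 n' + tt * qq ^+ 1 * G 0 n') = 0.
    by rewrite -E2 subrr.
  rewrite GSS; apply: lincomb; rewrite !G0b.
  rewrite !G0b in F1 F2.
  transitivity (qq * (G 1 n'.+1 - (G 1 n' + qq ^+ n'.+1 * 1 + tt * qq ^+ n'.+1 * 1))
                 - (G 1 n'.+1 - (1 + qq ^+ 1 * G 1 n' + tt * qq ^+ 1 * 1))); first by rewrite ?exprS ?expr0; ring.
  by rewrite F1 F2 ?exprS ?expr0; ring.
-
  have E1 := ih m' 0%N ltac:(lia).
  have E2 := GSS m' 0.
  have F1 : G m'.+1 1 - (G m'.+1 0 + qq ^+ 1 * G m' 1 + tt * qq ^+ 1 * G m' 0) = 0.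
    by rewrite E1 subrr.
  have F2 : G m'.+1 1 - (G m' 1 + qq ^+ m'.+1 * G m'.+1 0 + tt * qq ^+ m'.+1 * G m' 0) = 0.
    by rewrite -E2 subrr.
  rewrite GSS; apply: lincomb; rewrite !Gm0.
  rewrite !Gm0 in F1 F2.
  transitivity ((G m'.+1 1 - (1 + qq ^+ 1 * G m' 1 + tt * qq ^+ 1 * 1))
                 - qq * (G m'.+1 1 - (G m' 1 + qq ^+ m'.+1 * 1 + tt * qq ^+ m'.+1 * 1))); first by rewrite ?exprS ?expr0; ring.
  by rewrite F1 F2 ?exprS ?expr0; ring.
-
  have e1 := ih m' n'.+1 ltac:(lia).
  have e2 := ih m'.+1 n' ltac:(lia).
  have e3 := ih m' n' ltac:(lia).
  have f1 := GSS m' n'.+1.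
  have f2 := GSS m'.+1 n'.
  have f3 := GSS m' n'.
  set A1 := G m'.+1 n'.+2 in e1 f1 *.
  set A2 := G m'.+2 n'.+1 in e2 f2 *.
  set A3 := G m'.+1 n'.+1 in e1 e2 e3 f1 f2 f3 *.
  have E1 : A1 - (A3 + qq ^+ n'.+2 * G m' n'.+2 + tt * qq ^+ n'.+2 * G m' n'.+1) = 0 by rewrite -e1 subrr.
  have E2 : A2 - (G m'.+2 n' + qq ^+ n'.+1 * A3 + tt * qq ^+ n'.+1 * G m'.+1 n') = 0 by rewrite -e2 subrr.
  have E3 : A3 - (G m'.+1 n' + qq ^+ n'.+1 * G m' n'.+1 + tt * qq ^+ n'.+1 * G m' n') = 0 by rewrite -e3 subrr.
  have F1 : A1 - (G m' n'.+2 + qq ^+ m'.+1 * A3 + tt * qq ^+ m'.+1 * G m' n'.+1) = 0 by rewrite -f1 subrr.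
  have F2 : A2 - (A3 + qq ^+ m'.+2 * G m'.+2 n' + tt * qq ^+ m'.+2 * G m'.+1 n') = 0 by rewrite -f2 subrr.
  have F3 : A3 - (G m' n'.+1 + qq ^+ m'.+1 * G m'.+1 n' + tt * qq ^+ m'.+1 * G m' n') = 0 by rewrite -f3 subrr.
  rewrite GSS -/A1 -/A2 -/A3; apply: lincomb.
  transitivity (
    (A1 - (A3 + qq ^+ n'.+2 * G m' n'.+2 + tt * qq ^+ n'.+2 * G m' n'.+1))
  + qq ^+ m'.+2 * (A2 - (G m'.+2 n' + qq ^+ n'.+1 * A3 + tt * qq ^+ n'.+1 * G m'.+1 n'))
  + tt * qq ^+ m'.+2 * (A3 - (G m'.+1 n' + qq ^+ n'.+1 * G m' n'.+1 + tt * qq ^+ n'.+1 * G m' n'))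
  - (A2 - (A3 + qq ^+ m'.+2 * G m'.+2 n' + tt * qq ^+ m'.+2 * G m'.+1 n'))
  - qq ^+ n'.+2 * (A1 - (G m' n'.+2 + qq ^+ m'.+1 * A3 + tt * qq ^+ m'.+1 * G m' n'.+1))
  - tt * qq ^+ n'.+2 * (A3 - (G m' n'.+1 + qq ^+ m'.+1 * G m'.+1 n' + tt * qq ^+ m'.+1 * G m' n'))).
    by rewrite ?exprS ?expr0; ring.
  by rewrite E1 E2 E3 F1 F2 F3 ?exprS ?expr0; ring.
Qed.

Definition Gz (x y : int) : P :=
  match x, y with Posz m, Posz n => G m n | _, _ => 0 end.

Lemma PSm1 (m : nat) : (Posz m.+1 - 1 = Posz m)%R.
Proof. by rewrite -addn1 PoszD addrK. Qed.
Lemma P0m1 : (Posz 0 - 1 = Negz 0)%R.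
Proof. by []. Qed.
Lemma NSm1 (m : nat) : (Negz m - 1 = Negz m.+1)%R.
Proof. rewrite !NegzE; lia. Qed.

Lemma GzN x m : Gz x (Negz m) = 0. Proof. by case: x. Qed.
Lemma GzNx y m : Gz (Negz m) y = 0. Proof. by []. Qed.
Lemma GzP m n : Gz (Posz m) (Posz n) = G m n. Proof. by []. Qed.

Lemma R1z x y : ~~ ((x == 0) && (y == 0)) ->
  Gz x y = Gz (x - 1) y + qq ^+ absz x * Gz x (y - 1) + tt * qq ^+ absz x * Gz (x - 1) (y - 1).
Proof.
case: x => [[|m]|m]; case: y => [[|n]|n] //= _;
  rewrite ?PSm1 ?P0m1 ?NSm1 ?GzN ?GzNx ?GzP ?G0b ?Gm0 ?mulr0 ?addr0 ?add0r ?expr0 ?mul1r //.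
by rewrite !subSS !subn0.
Qed.

Lemma R2z x y : ~~ ((x == 0) && (y == 0)) ->
  Gz x y = Gz x (y - 1) + qq ^+ absz y * Gz (x - 1) y + tt * qq ^+ absz y * Gz (x - 1) (y - 1).
Proof.
case: x => [[|m]|m]; case: y => [[|n]|n] //= _;
  rewrite ?PSm1 ?P0m1 ?NSm1 ?GzN ?GzNx ?GzP ?G0b ?Gm0 ?mulr0 ?addr0 ?add0r ?expr0 ?mul1r //.
rewrite !subSS !subn0; exact: (GSS2 m n).
Qed.

Lemma posGz x y : pos (Gz x y).
Proof. case: x => [m|m]; case: y => [n|n] //=; try exact: posG; exact: pos0. Qed.

Definition F (s : nat) (a b c d : int) : P :=
  Gz a b * Gz c d - qq ^+ s * (Gz (a + 1) (b - 1) * Gz (c - 1) (d + 1)).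

Lemma Gz_negy x y : y < 0 -> Gz x y = 0.
Proof. by case: y => // n; case: x. Qed.
Lemma Gz_negx x y : x < 0 -> Gz x y = 0.
Proof. by case: x. Qed.

Lemma nz00 (x y : int) : (0 < x \/ 0 < y) -> ~~ ((x == 0) && (y == 0)).
Proof. move=> h; apply/negP => /andP[/eqP hx /eqP hy]; lia. Qed.

Lemma abszS (a : int) : 0 <= a -> absz (a + 1) = (absz a).+1.
Proof. case: a => // n _. by rewrite -PoszD addn1. Qed.
Lemma abszP (a : int) : 0 < a -> absz a = (absz (a - 1)).+1.
Proof. move=> h. rewrite -abszS; last by lia. by rewrite subrK. Qed.

Lemma Ra s a b c d : 0 < a -> 0 <= b ->
  F s a b c d = F s (a - 1) b c d + qq ^+ absz a * F s.+1 a (b - 1) c d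
              + tt * qq ^+ absz a * F s.+1 (a - 1) (b - 1) c d.
Proof.
move=> ha hb; rewrite /F (R1z a b); last by apply: nz00; lia.
rewrite (R1z (a + 1) (b - 1)); last by apply: nz00; lia.
rewrite addrK subrK abszS; last by lia.
rewrite !exprS; ring.
Qed.

Lemma Rb s a b c d : 0 < a -> 0 < b ->
  F s.+1 a b c d = F s.+1 a (b - 1) c d + qq ^+ absz b * F s (a - 1) b c d
              + tt * qq ^+ absz b * F s (a - 1) (b - 1) c d.
Proof.
move=> ha hb; rewrite /F (R2z a b); last by apply: nz00; lia.
rewrite (R2z (a + 1) (b - 1)); last by apply: nz00; lia.
rewrite addrK subrK (abszP b hb).
rewrite !exprS; ring.
Qed.

Lemma Rd s a b c d : 0 < c -> 0 <= d ->
  F s a b c d = F s a b c (d - 1) + qq ^+ absz d * F s.+1 a b (c - 1) d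
              + tt * qq ^+ absz d * F s.+1 a b (c - 1) (d - 1).
Proof.
move=> hc hd; rewrite /F (R2z c d); last by apply: nz00; lia.
rewrite (R2z (c - 1) (d + 1)); last by apply: nz00; lia.
rewrite addrK subrK abszS; last by lia.
rewrite !exprS; ring.
Qed.

Lemma Rc s a b c d : 0 < c -> 0 <= d ->
  F s.+1 a b c d = F s.+1 a b (c - 1) d + qq ^+ absz c * F s a b c (d - 1)
              + tt * qq ^+ absz c * F s a b (c - 1) (d - 1).
Proof.
move=> hc hd; rewrite /F (R1z c d); last by apply: nz00; lia.
rewrite (R1z (c - 1) (d + 1)); last by apply: nz00; lia.
rewrite addrK subrK (abszP c hc).
rewrite !exprS; ring.
Qed.

Lemma posqX n : pos (qq ^+ n). Proof. apply: posX; exact: posq. Qed.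
Lemma posC3 x y z (k : nat) : pos x -> pos y -> pos z ->
  pos (x + qq ^+ k * y + tt * qq ^+ k * z).
Proof.
move=> hx hy hz; apply: posD; [apply: posD => //|]; apply: posM => //;
  try apply: posM; try exact: posqX; exact: post.
Qed.

Lemma mainF (k : nat) : forall (s : nat) (a b c d : int),
  a + b + c + d <= k%:Z -> 0 <= a -> 0 <= b -> 0 <= c -> 0 <= d ->
  (s <= 1)%N -> c <= a + 1 -> b - 1 <= d ->
  (s = 1%N -> ~ (c = a + 1 /\ d = b - 1)) -> pos (F s a b c d).
Proof.
elim: k => [|k ih] s a b c d hk ha hb hc hd hs hca hbd hcor.
-
  have hb0 : b = 0 by lia.
  rewrite /F (Gz_negy (a + 1) (b - 1)); last by lia.
  rewrite mul0r mulr0 subr0; apply: posM; exact: posGz.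
have [hb0|hb0] := boolP (b == 0).
  rewrite /F (Gz_negy (a + 1) (b - 1)); last by move/eqP: hb0; lia.
  rewrite mul0r mulr0 subr0; apply: posM; exact: posGz.
have [hc0|hc0] := boolP (c == 0).
  rewrite /F (Gz_negx (c - 1) (d + 1)); last by move/eqP: hc0; lia.
  rewrite mulr0 mulr0 subr0; apply: posM; exact: posGz.
have hb1 : 0 < b by move/eqP: hb0; lia.
have hc1 : 0 < c by move/eqP: hc0; lia.
case: s hs hcor => [|[|s]] hs hcor //.
-
  have [eqc|neqc] := boolP ((c == a + 1) && (d == b - 1)).
    move/andP: eqc => [/eqP -> /eqP ->].
    rewrite /F addrK subrK expr0 mul1r mulrC subrr; exact: pos0.
  have [hca'|hca'] := boolP (c <= a).
  + rewrite Ra; [|lia|lia].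
    apply: posC3; apply: ih; lia.
  + have hc' : c = a + 1 by lia.
    have hdb : b <= d.
      move: neqc; rewrite hc' eqxx /= => /eqP h; lia.
    rewrite Rd //.
    apply: posC3; apply: ih; lia.
-
  have [hca'|hca'] := boolP (c <= a).
  + rewrite (Rb 0) //; last by lia.
    apply: posC3; apply: ih; lia.
  + have hc' : c = a + 1 by lia.
    have hdb : b <= d.
      have : ~ (c = a + 1 /\ d = b - 1) by exact: hcor.
      move=> h; lia.
    rewrite (Rc 0) //.
    apply: posC3; apply: ih; lia.
Qed.

Set Implicit Arguments. Unset Strict Implicit.

Definition consf (T : Type) (n : nat) (x : T) (f : {ffun 'I_n -> T}) : {ffun 'I_n.+1 -> T} :=
  [ffun i : 'I_n.+1 => if unlift ord0 i is Some j then f j else x].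
Definition tailf (T : Type) (n : nat) (g : {ffun 'I_n.+1 -> T}) : {ffun 'I_n -> T} :=
  [ffun j => g (lift ord0 j)].

Lemma consf0 T n x (f : {ffun 'I_n -> T}) : consf x f ord0 = x.
Proof. by rewrite ffunE unlift_none. Qed.
Lemma consfS T n x (f : {ffun 'I_n -> T}) j : consf x f (lift ord0 j) = f j.
Proof. by rewrite ffunE liftK. Qed.
Lemma consfK T n (g : {ffun 'I_n.+1 -> T}) : consf (g ord0) (tailf g) = g.
Proof.
apply/ffunP => i; case: (unliftP ord0 i) => [j|] ->; by rewrite ?consf0 ?consfS ?ffunE.
Qed.
Lemma tailfK T n x (f : {ffun 'I_n -> T}) : tailf (consf x f) = f.
Proof. by apply/ffunP => j; rewrite ffunE consfS. Qed.

Lemma is_op_cons (m b : nat) (x : 'I_m.+1) (y : bool) (p : {ffun 'I_b -> 'I_m.+1})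
    (o : {ffun 'I_b -> bool}) :
  is_overpart (consf x p) (consf y o) =
  [&& [forall j, (p j <= x)%N], is_overpart p o &
      (y ==> (0 < x)%N && [forall j, (p j < x)%N])].
Proof.
rewrite /is_overpart; apply/idP/idP.
- case/andP => /forallP H1 /forallP H2.
  have c1 : [forall j, (p j <= x)%N].
    apply/forallP => j; have := H1 ord0 => /forallP /(_ (lift ord0 j)).
    by rewrite consf0 consfS.
  rewrite c1 /=; apply/andP; split; first (apply/andP; split).
  + apply/forallP => i; apply/forallP => j; apply/implyP => hij.
    have := H1 (lift ord0 i) => /forallP /(_ (lift ord0 j)).
    by rewrite !consfS !lift0 ltnS hij.
  + apply/forallP => i; apply/implyP => hoi.
    have := H2 (lift ord0 i); rewrite consfS hoi /= consfS => /andP[-> /forallP H3] /=.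
    apply/forallP => j; apply/implyP => hij.
    have := H3 (lift ord0 j); by rewrite !consfS !lift0 ltnS hij.
  + apply/implyP => hy; have := H2 ord0; rewrite consf0 hy consf0 /= => /andP[-> /forallP H3] /=.
    apply/forallP => j; have := H3 (lift ord0 j); by rewrite consfS lift0.
- case/and3P => /forallP c1 /andP[/forallP H1 /forallP H2] hy.
  apply/andP; split.
  + apply/forallP => i; apply/forallP => j; apply/implyP => hij.
    move: hij; case: (unliftP ord0 i) => [i'|] ->; case: (unliftP ord0 j) => [j'|] ->;
      rewrite ?consf0 ?consfS ?lift0 //.
    * rewrite ltnS => hij; have := H1 i' => /forallP /(_ j'); by rewrite hij.
  + apply/forallP => i; case: (unliftP ord0 i) => [i'|] ->.
    * rewrite !consfS; apply/implyP => hoi; have := H2 i'; rewrite hoi => /andP[-> /forallP H3] /=.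
      apply/forallP => j; apply/implyP; case: (unliftP ord0 j) => [j'|] ->;
        rewrite ?consf0 ?consfS ?lift0 //.
      rewrite ltnS => hij; have := H3 j'; by rewrite hij.
    * rewrite !consf0; apply/implyP => hy1; move: hy; rewrite hy1 /= => /andP[-> /forallP H3] /=.
      apply/forallP => j; apply/implyP; case: (unliftP ord0 j) => [j'|] ->;
        rewrite ?consf0 ?consfS ?lift0 //.
Qed.

Set Implicit Arguments. Unset Strict Implicit.

Definition Tm (m b : nat) (po : {ffun 'I_b -> 'I_m.+1} * {ffun 'I_b -> bool}) : P :=
  'X^(op_novl po.2) * ('X^(op_weight po.1))%:P.

Definition ovg (m b : nat) : P :=
  \sum_(po : {ffun 'I_b -> 'I_m.+1} * {ffun 'I_b -> bool} | is_overpart po.1 po.2) Tm po.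

Lemma ovgaussE n k : ovgauss n k = ovg (n - k) k.
Proof. by []. Qed.

Definition widenf (m b : nat) (p : {ffun 'I_b -> 'I_m.+1}) : {ffun 'I_b -> 'I_m.+2} :=
  [ffun i => widen_ord (leqnSn m.+1) (p i)].
Definition narrowf (m b : nat) (p : {ffun 'I_b -> 'I_m.+2}) : {ffun 'I_b -> 'I_m.+1} :=
  [ffun i => inord (p i)].

Lemma narrow_sum (m b : nat) :
  \sum_(po : {ffun 'I_b -> 'I_m.+2} * {ffun 'I_b -> bool} |
          is_overpart po.1 po.2 && [forall j, (po.1 j < m.+1)%N]) Tm po = ovg m b.
Proof.
rewrite (reindex_onto (fun po : {ffun 'I_b -> 'I_m.+1} * {ffun 'I_b -> bool} => (widenf po.1, po.2))
                      (fun po => (narrowf po.1, po.2))).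
  rewrite /ovg; apply: eq_big => [[p o]|[p o] _] /=.
    have -> : narrowf (widenf p) = p.
      by apply/ffunP => i; apply: val_inj; rewrite !ffunE /= inordK.
    rewrite eqxx andbT.
    have -> : [forall j, (widenf p j < m.+1)%N] by apply/forallP => j; rewrite ffunE /=.
    rewrite andbT /is_overpart; congr (_ && _).
      by apply: eq_forallb => i; apply: eq_forallb => j; rewrite !ffunE.
    by apply: eq_forallb => i; rewrite !ffunE; congr (_ ==> (_ && _));
       apply: eq_forallb => j; rewrite !ffunE.
  rewrite /Tm /=; congr (_ * ('X^_)%:P).
  by apply: eq_bigr => i _; rewrite ffunE.
move=> [p o] /= /andP[_ /forallP h]; congr pair.
by apply/ffunP => i; apply: val_inj; rewrite !ffunE /= inordK.
Qed.

Set Implicit Arguments. Unset Strict Implicit.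

Lemma ovg_m0 m : ovg m 0 = 1.
Proof.
rewrite /ovg (big_pred1 ([ffun i => ord0], [ffun i => false])).
  by rewrite /Tm /op_novl /op_weight /= !big_ord0 expr0 mul1r.
move=> [p o] /=; rewrite /is_overpart.
have -> : p = [ffun i => ord0] by apply/ffunP => -[].
have -> : o = [ffun i => false] by apply/ffunP => -[].
rewrite eqxx; apply/andP; split; by apply/forallP => -[].
Qed.

Lemma ovg_0b b : ovg 0 b = 1.
Proof.
rewrite /ovg (big_pred1 ([ffun i => ord0], [ffun i => false])).
  rewrite /Tm /op_novl /op_weight /= !big1 ?expr0 ?mul1r // => i _; by rewrite ffunE.
move=> [p o] /=; rewrite /is_overpart.
have -> : p = [ffun i => ord0] by apply/ffunP => i; rewrite ffunE; apply: val_inj; case: (p i) => -[].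
apply/idP/idP.
- case/andP => _ /forallP h; apply/eqP; congr pair; apply/ffunP => i.
  have := h i; rewrite !ffunE /=; by case: (o i).
- move/eqP => [->]; apply/andP; split; apply/forallP => i; rewrite ?ffunE //.
  by apply/forallP => j; rewrite ffunE implybT.
Qed.

Set Implicit Arguments. Unset Strict Implicit.

Lemma novl_cons b y (o : {ffun 'I_b -> bool}) : op_novl (consf y o) = (y + op_novl o)%N.
Proof. by rewrite /op_novl big_ord_recl consf0; congr (_ + _)%N; apply: eq_bigr => i _; rewrite consfS. Qed.
Lemma weight_cons m b (x : 'I_m.+1) (p : {ffun 'I_b -> 'I_m.+1}) :
  op_weight (consf x p) = (x + op_weight p)%N.
Proof. by rewrite /op_weight big_ord_recl consf0; congr (_ + _)%N; apply: eq_bigr => i _; rewrite consfS. Qed.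

Lemma pred_cons m b (x : 'I_m.+2) (y : bool) (p : {ffun 'I_b -> 'I_m.+2}) o :
  is_overpart (consf x p) (consf y o) && ~~ [forall j, (consf x p j < m.+1)%N] =
  (x == ord_max) && (is_overpart p o && (y ==> [forall j, (p j < m.+1)%N])).
Proof.
rewrite is_op_cons.
have [->|hx] := eqVneq x ord_max.
  rewrite /=.
  have -> : [forall j, (p j <= m.+1)%N] by apply/forallP => j; rewrite -ltnS.
  have -> : ~~ [forall j, (consf ord_max p j < m.+1)%N].
    by apply/negP => /forallP /(_ ord0); rewrite consf0 /= ltnn.
  by rewrite andbT.
have hx' : (x < m.+1)%N.
  have := ltn_ord x; rewrite ltnS leq_eqVlt => /orP[/eqP h|//].
  by case/eqP: hx; apply: val_inj.
apply/negbTE/negP => /andP[/and3P[/forallP c1 _ _] /negP]; apply.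
apply/forallP => i; case: (unliftP ord0 i) => [j|] ->; rewrite ?consf0 ?consfS //.
exact: leq_ltn_trans (c1 j) hx'.
Qed.

Lemma ovg_SS m b :
  ovg m.+1 b.+1 = ovg m b.+1 + qq ^+ m.+1 * ovg m.+1 b + tt * qq ^+ m.+1 * ovg m b.
Proof.
rewrite {1}/ovg (bigID (fun po : {ffun 'I_b.+1 -> 'I_m.+2} * {ffun 'I_b.+1 -> bool} =>
                      [forall j, (po.1 j < m.+1)%N])) /=.
rewrite narrow_sum -addrA; congr (_ + _).
rewrite (reindex (fun z : ('I_m.+2 * bool) * ({ffun 'I_b -> 'I_m.+2} * {ffun 'I_b -> bool}) =>
                    (consf z.1.1 z.2.1, consf z.1.2 z.2.2))) /=; last first.
  apply: onW_bij; exists (fun po : {ffun 'I_b.+1 -> 'I_m.+2} * {ffun 'I_b.+1 -> bool} =>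
                          ((po.1 ord0, po.2 ord0), (tailf po.1, tailf po.2))).
    by move=> [[x y] [p o]] /=; rewrite !consf0 !tailfK.
  by move=> [p o] /=; rewrite !consfK.
transitivity (\sum_(x : 'I_m.+2 | x == ord_max) \sum_(y : bool | true)
   \sum_(po : {ffun 'I_b -> 'I_m.+2} * {ffun 'I_b -> bool} |
           is_overpart po.1 po.2 && (y ==> [forall j, (po.1 j < m.+1)%N]))
     (('X^(y + op_novl po.2) : P) * ('X^(x + op_weight po.1))%:P)).
  rewrite pair_big_dep pair_big_dep; apply: eq_big => [[[x y] [p o]]|[[x y] [p o]] _] /=.
    by rewrite pred_cons andbT.
  by rewrite /Tm /= novl_cons weight_cons.
rewrite big_pred1_eq big_bool /= addrC; congr (_ + _).
  rewrite /ovg mulr_sumr; apply: eq_big => [[p o]|[p o] _] /=; first by rewrite andbT.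
  by rewrite /Tm add0n exprD rmorphM rmorphXn /=; rewrite /qq; ring.
rewrite -narrow_sum mulr_sumr; apply: eq_big => [[p o]|[p o] _] //=.
by rewrite /Tm /= !exprD !rmorphM !rmorphXn /= /qq /tt; ring.
Qed.

Lemma ovgG m b : ovg m b = G m b.
Proof.
elim: m b => [|m ih] b; first by rewrite ovg_0b.
elim: b => [|b ihb]; first by rewrite ovg_m0 Gm0.
by rewrite ovg_SS GSS ihb !ih.
Qed.

Unset Implicit Arguments.
Theorem corollary6p1 (n k : nat) :
  (0 < k)%N -> (k < n)%N ->
  forall i j : nat,
    0 <= ((ovgauss n k ^+ 2 - ovgauss n k.-1 * ovgauss n k.+1)`_i)`_j.
Proof.
move=> hk hkn i j.
have e1 : ovgauss n k = Gz (n - k)%N k by rewrite ovgaussE ovgG.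
have e2 : ovgauss n k.-1 = Gz ((n - k)%N%:Z + 1) (k%:Z - 1).
  rewrite ovgaussE ovgG.
  have -> : ((n - k)%N%:Z + 1 = (n - k.-1)%N%:Z)%R by lia.
  have -> : (k%:Z - 1 = k.-1%:Z)%R by lia.
  by [].
have e3 : ovgauss n k.+1 = Gz ((n - k)%N%:Z - 1) (k%:Z + 1).
  rewrite ovgaussE ovgG.
  have -> : ((n - k)%N%:Z - 1 = (n - k.+1)%N%:Z)%R by lia.
  have -> : (k%:Z + 1 = k.+1%:Z)%R by lia.
  by [].
have -> : ovgauss n k ^+ 2 - ovgauss n k.-1 * ovgauss n k.+1
          = F 0 (n - k)%N k (n - k)%N k.
  by rewrite /F e1 e2 e3 expr0 mul1r expr2.
apply: (@mainF (2 * n)%N); lia.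
Qed.
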